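(* Let $i\colon Y\to X$ be a continuous bijection between topological spaces. If $X$ is homeomorphic to a subspace of a separable Hausdorff space, then so is $Y$. *)

(* Defs.v *)
From Stdlib Require Import Classical.

Record TopSpace : Type := {
  carrier :> Type;
  is_open : (carrier -> Prop) -> Prop;
  open_full : is_open (fun _ => True);
  open_inter : forall U V, is_open U -> is_open V -> is_open (fun x => U x /\ V x);
  open_union : forall F : (carrier -> Prop) -> Prop,
      (forall U, F U -> is_open U) -> is_open (fun x => exists U, F U /\ U x)
}.

Arguments is_open {t} _.

Definition continuous {X Y : TopSpace} (f : X -> Y) : Prop :=
  forall V : Y -> Prop, is_open V -> is_open (fun x => V (f x)).

Definition injective {A B : Type} (f : A -> B) : Prop :=
  forall x y, f x = f y -> x = y.

Definition surjective {A B : Type} (f : A -> B) : Prop :=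
  forall y, exists x, f x = y.

Definition bijective {A B : Type} (f : A -> B) : Prop :=
  injective f /\ surjective f.

Definition hausdorff (X : TopSpace) : Prop :=
  forall x y : X, x <> y ->
    exists U V : X -> Prop, is_open U /\ is_open V /\ U x /\ V y /\
      (forall z, ~ (U z /\ V z)).

Definition countable_set {A : Type} (D : A -> Prop) : Prop :=
  exists f : {x : A | D x} -> nat, injective f.

Definition dense {X : TopSpace} (D : X -> Prop) : Prop :=
  forall U : X -> Prop, is_open U -> (exists x, U x) -> exists x, U x /\ D x.

Definition separable (X : TopSpace) : Prop :=
  exists D : X -> Prop, countable_set D /\ dense D.

(* e is a topological embedding: a homeomorphism of X onto the subspace
   e(X) of Z (with the subspace topology). *)
Definition embedding {X Z : TopSpace} (e : X -> Z) : Prop :=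
  injective e /\ continuous e /\
  (forall U : X -> Prop, is_open U ->
     exists V : Z -> Prop, is_open V /\ forall x, U x <-> V (e x)).

Definition embeds_in_sep_hausdorff (X : TopSpace) : Prop :=
  exists (Z : TopSpace) (e : X -> Z), separable Z /\ hausdorff Z /\ embedding e.

(* Main.v *)
Require Import Defs.
From Stdlib Require Import Classical FunctionalExtensionality PropExtensionality Lia ProofIrrelevance.

Lemma empty_open (T : TopSpace) (P : T -> Prop) : (forall x, ~ P x) -> is_open P.
Proof.
  intro H. assert (Hf0 := open_union T (fun _ => False) (fun _ H => match H with end)).
  assert (Heq2 : (fun x : T => exists U : T -> Prop, False /\ U x) = P).
  { apply functional_extensionality; intro x; apply propositional_extensionality; split;
    [intros [_ [[] _]]|intro Hx; destruct (H x Hx)]. }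
  simpl in Hf0; rewrite Heq2 in Hf0; exact Hf0.
Qed.

Section W.
Variables (Y Z : TopSpace) (E : Y -> Z) (D : Z -> Prop).

Definition WT := (Y + {z | D z})%type.

Definition Wopen (U : WT -> Prop) : Prop :=
  is_open (fun y => U (inl y)) /\
  forall y, U (inl y) -> exists V : Z -> Prop, is_open V /\ V (E y) /\
     forall d : {z | D z}, V (proj1_sig d) -> proj1_sig d <> E y -> U (inr d).

Lemma W_full : Wopen (fun _ => True).
Proof.
  split. apply open_full. intros y _. exists (fun _ => True). split; [apply open_full|auto].
Qed.

Lemma W_inter : forall U V, Wopen U -> Wopen V -> Wopen (fun x => U x /\ V x).
Proof.
  intros U V [HU1 HU2] [HV1 HV2]. split.
  - apply (open_inter _ _ _ HU1 HV1).
  - intros y [Uy Vy]. destruct (HU2 y Uy) as [A [HA [Ay HA']]].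
    destruct (HV2 y Vy) as [B [HB [By HB']]].
    exists (fun x => A x /\ B x). split; [apply open_inter; auto|]. split; [auto|].
    intros d [Ad Bd] ne. split; auto.
Qed.

Lemma W_union : forall F : (WT -> Prop) -> Prop,
  (forall U, F U -> Wopen U) -> Wopen (fun x => exists U, F U /\ U x).
Proof.
  intros F HF. split.
  - set (F' := fun (U' : Y -> Prop) => exists U, F U /\ U' = (fun y => U (inl y))).
    assert (Heq : (fun y => exists U, F U /\ U (inl y)) = (fun y => exists U', F' U' /\ U' y)).
    { apply functional_extensionality. intro y. apply propositional_extensionality. split.
      - intros [U [FU Uy]]. exists (fun y => U (inl y)). split; auto. exists U; auto.
      - intros [U' [[U [FU ->]] Uy]]. exists U; auto. }
    rewrite Heq. apply open_union. intros U' [U [FU ->]]. apply (HF U FU).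
  - intros y [U [FU Uy]]. destruct (proj2 (HF U FU) y Uy) as [V [HV [Vy HV']]].
    exists V. split; auto. split; auto. intros d Vd ne. exists U; auto.
Qed.

Definition WSpace : TopSpace := {| carrier := WT; is_open := Wopen;
  open_full := W_full; open_inter := W_inter; open_union := W_union |}.

End W.

Theorem mainTheorem18 (X Y : TopSpace) (i : Y -> X) :
  continuous i -> bijective i ->
  embeds_in_sep_hausdorff X -> embeds_in_sep_hausdorff Y.
Proof.
  intros Hc [Hinj _] [Z [e [[D [[f Hf] Hdense]] [Hh [einj [econt _]]]]]].
  set (E := fun y => e (i y)).
  assert (Einj : injective E). { intros a b H. apply Hinj, einj, H. }
  assert (Econt : continuous E). { intros V HV. exact (Hc _ (econt V HV)). }
  exists (WSpace Y Z E D). exists (fun y => inl y : WT Y Z D).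
  split; [|split].
  -
    exists (fun w : WT Y Z D => match w with inl y => D (E y) | inr _ => True end).
    split.
    + exists (fun w => match proj1_sig w as w0 return
                (match w0 with inl y => D (E y) | inr _ => True end) -> nat with
              | inl y => fun p => 2 * f (exist _ (E y) p)
              | inr d => fun _ => S (2 * f d) end (proj2_sig w)).
      intros [[y|d] p] [[y'|d'] p']; simpl; intro H.
      * assert (H2 : f (exist _ (E y) p) = f (exist _ (E y') p')) by lia.
        apply Hf in H2. injection H2 as H2. apply Einj in H2. subst y'.
        f_equal; apply proof_irrelevance.
      * lia.
      * lia.
      * assert (H2 : f d = f d') by lia. apply Hf in H2. subst d'.
        f_equal; apply proof_irrelevance.
    + intros U [HU1 HU2] [[y|d] Uw].
      * destruct (classic (D (E y))) as [Dy|nDy].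
        -- exists (inl y); auto.
        -- destruct (HU2 y Uw) as [V [HV [Vy HV']]].
           destruct (Hdense V HV (ex_intro _ _ Vy)) as [z [Vz Dz]].
           exists (inr (exist _ z Dz)). split; auto. apply HV'; simpl; auto.
           intro; subst; contradiction.
      * exists (inr d). auto.
  -
    intros [y|d] [y'|d'] ne.
    + assert (nz : E y <> E y'). { intro H. apply ne. f_equal. apply Einj, H. }
      destruct (Hh _ _ nz) as [A [B [HA [HB [Ay [By AB]]]]]].
      exists (fun w : WT Y Z D => match w with inl y => A (E y) | inr d => A (proj1_sig d) end).
      exists (fun w : WT Y Z D => match w with inl y => B (E y) | inr d => B (proj1_sig d) end).
      split; [split; [apply Econt, HA|]|split; [split; [apply Econt, HB|]|]].
      * intros x Ax. exists A. auto.
      * intros x Bx. exists B. auto.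
      * split; auto. split; auto. intros [x|x]; apply AB.
    + exists (fun w : WT Y Z D => match w with inl _ => True | inr x => x <> d' end).
      exists (fun w : WT Y Z D => w = inr d').
      split; [split; [apply open_full|]|split; [split|]].
      * intros x _. destruct (classic (E x = proj1_sig d')) as [eq|neq].
        -- exists (fun _ => True). split; [apply open_full|]. split; auto.
           intros d0 _ n0 ->. apply n0, eq_sym, eq.
        -- destruct (Hh _ _ neq) as [A [B [HA [HB [Ay [By AB]]]]]].
           exists A. split; auto. split; auto. intros d0 Ad0 _ ->. apply (AB (proj1_sig d')); auto.
      * apply empty_open. intros x H; discriminate.
      * intros x H; discriminate.
      * split; auto. split; auto. intros [x|x]; simpl; [intros [_ H]; discriminate|].
        intros [H1 H2]. first [injection H2 as H2 | injection H1 as H1]; subst; contradiction.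
    + exists (fun w : WT Y Z D => w = inr d).
      exists (fun w : WT Y Z D => match w with inl _ => True | inr x => x <> d end).
      split; [split|split; [split; [apply open_full|]|]].
      * apply empty_open. intros x H; discriminate.
      * intros x H; discriminate.
      * intros x _. destruct (classic (E x = proj1_sig d)) as [eq|neq].
        -- exists (fun _ => True). split; [apply open_full|]. split; auto.
           intros d0 _ n0 ->. apply n0, eq_sym, eq.
        -- destruct (Hh _ _ neq) as [A [B [HA [HB [Ay [By AB]]]]]].
           exists A. split; auto. split; auto. intros d0 Ad0 _ ->. apply (AB (proj1_sig d)); auto.
      * split; auto. split; auto. intros [x|x]; simpl; [intros [H _]; discriminate|].
        intros [H1 H2]. first [injection H2 as H2 | injection H1 as H1]; subst; contradiction.
    + exists (fun w : WT Y Z D => w = inr d).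
      exists (fun w : WT Y Z D => w = inr d').
      assert (Hemp : forall dd, Wopen Y Z E D (fun w => w = inr dd)).
      { intro dd. split. apply empty_open. intros x H; discriminate. intros x H; discriminate. }
      pose proof (Hemp d) as H1. pose proof (Hemp d') as H2.
      split; auto. split; auto. split; auto. split; auto.
      intros w [-> H]. apply ne. exact H.
  -
    split; [|split].
    + intros a b H. injection H; auto.
    + intros V [HV _]. exact HV.
    + intros U HU.
      exists (fun w : WT Y Z D => match w with inl y => U y | inr _ => True end).
      split; [split|].
      * exact HU.
      * intros y _. exists (fun _ => True). split; [apply open_full|auto].
      * intro; tauto.
Qed.
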